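(* Under the three-receiver coding module below, in every slot the transmitted linear combination is innovative (i.e., not already known, so it increases the receiver's rank if received) to every receiver that has not decoded everything that the sender knows.
   Context: A sender broadcasts packets $\mathbf{p}_1,\mathbf{p}_2,\dots$ (indexed by arrival order, vectors over $\mathbb{F}_3$) to three receivers $1,2,3$ over a slotted erasure broadcast channel; each slot it transmits at most one linear combination of arrived packets, each receiver either receives it or suffers an erasure, and perfect feedback gives the sender every receiver's knowledge. The rank of a receiver is the dimension of the space of linear combinations it knows. Receiver $i$ has heard of a packet if it knows some linear combination involving that packet (with nonzero coefficient); $H_i$ is the set of packets it has heard of and $D_i$ the set it has decoded. ''Oldest'' means smallest index. Coding module: labels $L,N,D$ form a permutation of $\{1,2,3\}$; initially $L=1,N=2,D=3,m=0$. Each slot: let $U=\{\mathbf{p}_1,\dots,\mathbf{p}_m\}$ together with $\mathbf{p}_{m+1}$ if it has arrived, and set $S_1=D_N\cap D_D$, $S_2=D_N\cap(H_D\setminus D_D)$, $S_3=D_N\setminus H_D$, $S_4=D_D\setminus D_N$, $S_5=(H_D\setminus D_D)\setminus D_N$, $S_6=U\setminus(H_D\cup D_N)$. Transmit: Case 1 ($\mathbf{p}_{m+1}$ not arrived): if $S_2,S_4$ both nonempty send the sum of their oldest packets; else if $S_3,S_4$ both nonempty send the sum of their oldest packets; else send the oldest packet of the first nonempty set among $S_5,S_6,S_2,S_3,S_4$; if all are empty send nothing. Case 2 ($\mathbf{p}_{m+1}\in S_1$): send $\mathbf{p}_{m+1}$ plus whatever Case 1 would send. Case 3 ($\mathbf{p}_{m+1}\in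 S_2$): send $\mathbf{p}_{m+1}+c\mathbf{p}$ with $\mathbf{p}$ the oldest packet of the first nonempty set among $S_4,S_5,S_6$, where $c=1$ unless $\mathbf{p}\in S_5$, in which case $c\in\{1,2\}$ is chosen so that the combination is innovative to receiver $D$. Case 4 ($\mathbf{p}_{m+1}\in S_3$): send $\mathbf{p}_{m+1}+\mathbf{p}$, $\mathbf{p}$ the oldest packet of the first nonempty set among $S_4,S_5,S_6$. Case 5 ($\mathbf{p}_{m+1}\in S_4$): send $\mathbf{p}_{m+1}+\mathbf{p}$, $\mathbf{p}$ the oldest packet of the first nonempty set among $S_2,S_3,S_6$. (In Cases 3–5, if all listed sets are empty, $\mathbf{p}_{m+1}$ is sent alone.) Case 6 (otherwise): send $\mathbf{p}_{m+1}$. After feedback, update $H_i,D_i$, set $m$ to the maximum rank of the three receivers; among receivers that have decoded all of $\mathbf{p}_1,\dots,\mathbf{p}_m$, label the one with lowest index $L$ (if there is none, assign labels arbitrarily); of the other two receivers, if exactly one has nonempty unsolved set $H_i\setminus D_i$, label it $D$ and the other $N$; otherwise assign $D,N$ arbitrarily. *)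

(* Defs.v *)
From HB Require Import structures.
From mathcomp Require Import all_boot all_order all_algebra.
Set Implicit Arguments. Unset Strict Implicit. Unset Printing Implicit Defensive.
Import GRing.Theory.
Local Open Scope ring_scope.

Notation F3 := 'F_3.

(** A linear combination of packets is represented by its coefficient
    function: [w k] is the coefficient of packet p_k (packets are indexed
    from 1 in arrival order; index 0 is never used). *)
Definition vec := nat -> F3.
Definition vzero : vec := fun _ => 0.
Definition vadd (u v : vec) : vec := fun j => u j + v j.
Definition vscale (c : F3) (v : vec) : vec := fun j => c * v j.
Definition unit_vec (k : nat) : vec := fun j => (j == k)%:R.

Definition knows (L : seq vec) (w : vec) : Prop :=
  exists cs : seq F3, size cs = size L /\
    forall j, w j = \sum_(i < size L) cs`_i * (nth vzero L i) j.

Definition lin_indep (L : seq vec) : Prop :=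
  forall cs : seq F3, size cs = size L ->
    (forall j, \sum_(i < size L) cs`_i * (nth vzero L i) j = 0) ->
    forall i, (i < size L)%N -> cs`_i = 0.

Definition is_rank (L : seq vec) (r : nat) : Prop :=
  (exists B : seq vec, size B = r /\ lin_indep B /\ forall i, (i < size B)%N -> knows L (nth vzero B i))
  /\ (forall B : seq vec, lin_indep B -> (forall i, (i < size B)%N -> knows L (nth vzero B i)) ->
        (size B <= r)%N).

Definition heard (L : seq vec) (k : nat) : Prop :=
  (1 <= k)%N /\ exists w, knows L w /\ w k != 0.
Definition decoded (L : seq vec) (k : nat) : Prop :=
  (1 <= k)%N /\ knows L (unit_vec k).

Definition decoded_upto (L : seq vec) (m : nat) : Prop :=
  forall k, (1 <= k <= m)%N -> decoded L k.
Definition unsolved_nonempty (L : seq vec) : Prop :=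
  exists k, heard L k /\ ~ decoded L k.

Definition nonempty (P : nat -> Prop) : Prop := exists k, P k.
Definition oldest (P : nat -> Prop) (k : nat) : Prop :=
  P k /\ forall j, P j -> (k <= j)%N.
Fixpoint first_oldest (l : seq (nat -> Prop)) (k : nat) : Prop :=
  match l with
  | [::] => False
  | P :: l' => (nonempty P /\ oldest P k) \/ (~ nonempty P /\ first_oldest l' k)
  end.
Fixpoint all_empty (l : seq (nat -> Prop)) : Prop :=
  match l with
  | [::] => True
  | P :: l' => ~ nonempty P /\ all_empty l'
  end.

Section Sets.
(* K : knowledge of the three receivers, a : number of arrived packets,
   m : the counter m, n d : receivers labelled N and D. *)
Variables (K : 'I_3 -> seq vec) (a m : nat) (n d : 'I_3).

Definition setU (k : nat) : Prop := (1 <= k <= m)%N \/ (k = m.+1 /\ (m.+1 <= a)%N).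
Definition S1 k := decoded (K n) k /\ decoded (K d) k.
Definition S2 k := decoded (K n) k /\ heard (K d) k /\ ~ decoded (K d) k.
Definition S3 k := decoded (K n) k /\ ~ heard (K d) k.
Definition S4 k := decoded (K d) k /\ ~ decoded (K n) k.
Definition S5 k := (heard (K d) k /\ ~ decoded (K d) k) /\ ~ decoded (K n) k.
Definition S6 k := setU k /\ ~ (heard (K d) k \/ decoded (K n) k).

Definition case1 (x : option vec) : Prop :=
  (nonempty S2 /\ nonempty S4 /\
     exists j k, oldest S2 j /\ oldest S4 k /\ x = Some (vadd (unit_vec j) (unit_vec k)))
  \/ (~ (nonempty S2 /\ nonempty S4) /\ nonempty S3 /\ nonempty S4 /\
     exists j k, oldest S3 j /\ oldest S4 k /\ x = Some (vadd (unit_vec j) (unit_vec k)))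
  \/ (~ (nonempty S2 /\ nonempty S4) /\ ~ (nonempty S3 /\ nonempty S4) /\
      ((exists k, first_oldest [:: S5; S6; S2; S3; S4] k /\ x = Some (unit_vec k))
       \/ (all_empty [:: S5; S6; S2; S3; S4] /\ x = None))).

Definition new_pkt : vec := unit_vec m.+1.

Definition send_with (l : seq (nat -> Prop)) (x : option vec) : Prop :=
  (exists p, first_oldest l p /\ x = Some (vadd new_pkt (unit_vec p)))
  \/ (all_empty l /\ x = Some new_pkt).

Definition coef_ok (p : nat) (c : F3) : Prop :=
  (~ S5 p -> c = 1) /\
  (S5 p -> (c = 1 \/ c = 2%:R) /\
     ((exists c', (c' = 1 \/ c' = 2%:R) /\
                  ~ knows (K d) (vadd new_pkt (vscale c' (unit_vec p)))) ->
      ~ knows (K d) (vadd new_pkt (vscale c (unit_vec p))))).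

Definition tx_rule (x : option vec) : Prop :=
  (~ (m.+1 <= a)%N /\ case1 x)
  \/ ((m.+1 <= a)%N /\ S1 m.+1 /\
      exists y, case1 y /\
        x = Some (match y with Some v => vadd new_pkt v | None => new_pkt end))
  \/ ((m.+1 <= a)%N /\ S2 m.+1 /\
      ((exists p c, first_oldest [:: S4; S5; S6] p /\ coef_ok p c /\
          x = Some (vadd new_pkt (vscale c (unit_vec p))))
       \/ (all_empty [:: S4; S5; S6] /\ x = Some new_pkt)))
  \/ ((m.+1 <= a)%N /\ S3 m.+1 /\ send_with [:: S4; S5; S6] x)
  \/ ((m.+1 <= a)%N /\ S4 m.+1 /\ send_with [:: S2; S3; S6] x)
  \/ ((m.+1 <= a)%N /\ ~ S1 m.+1 /\ ~ S2 m.+1 /\ ~ S3 m.+1 /\ ~ S4 m.+1 /\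
      x = Some new_pkt).
End Sets.

Definition max_rank (K : 'I_3 -> seq vec) (m : nat) : Prop :=
  exists r : 'I_3 -> nat, (forall i, is_rank (K i) (r i)) /\ m = (\max_i r i)%N.

Definition valid_labels (K : 'I_3 -> seq vec) (m : nat) (l n d : 'I_3) : Prop :=
  l != n /\ l != d /\ n != d /\
  ((exists i, decoded_upto (K i) m) ->
     (decoded_upto (K l) m /\ forall i, decoded_upto (K i) m -> (l <= i)%N) /\
     (~ (unsolved_nonempty (K n) <-> unsolved_nonempty (K d)) ->
        unsolved_nonempty (K d))).

Definition r1 : 'I_3 := @Ordinal 3 0 isT.
Definition r2 : 'I_3 := @Ordinal 3 1 isT.
Definition r3 : 'I_3 := @Ordinal 3 2 isT.

(** Slot t: [arr t] packets have arrived, [K t i] is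
    what receiver i has received before slot t, [m t], [lL t], [lN t], [lD t]
    the counter and labels in force at slot t, [tx t] the transmission
    ([None] = nothing sent) and [rcv t i] whether receiver i received it. *)
Definition valid_run (arr : nat -> nat) (rcv : nat -> 'I_3 -> bool)
    (K : nat -> 'I_3 -> seq vec) (m : nat -> nat) (lL lN lD : nat -> 'I_3)
    (tx : nat -> option vec) : Prop :=
  (forall t, (arr t <= arr t.+1)%N) /\
  (forall i, K 0%N i = [::]) /\ m 0%N = 0%N /\
  lL 0%N = r1 /\ lN 0%N = r2 /\ lD 0%N = r3 /\
  (forall t, tx_rule (K t) (arr t) (m t) (lN t) (lD t) (tx t)) /\
  (forall t i, K t.+1 i =
     match tx t with
     | Some v => if rcv t i then rcons (K t i) v else K t i
     | None => K t i
     end) /\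
  (forall t, max_rank (K t.+1) (m t.+1)) /\
  (forall t, valid_labels (K t.+1) (m t.+1) (lL t.+1) (lN t.+1) (lD t.+1)).

(* Main.v *)
Require Import Defs.
From mathcomp Require Import all_boot all_order all_algebra.
From mathcomp Require Import ring.
From Stdlib Require Import Classical.
Set Implicit Arguments. Unset Strict Implicit. Unset Printing Implicit Defensive.
Import GRing.Theory.
Local Open Scope ring_scope.

Lemma knows_ext L u v : knows L u -> (forall j, u j = v j) -> knows L v.
Proof. by move=> [cs [Hs Hu]] E; exists cs; split=> // j; rewrite -E. Qed.

Lemma knows0 L : knows L vzero.
Proof.
exists (nseq (size L) 0); split; first by rewrite size_nseq.
move=> j; rewrite /vzero big1 // => i _; by rewrite nth_nseq; case: ifP; rewrite mul0r.
Qed.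

Lemma knows_lin L u v c : knows L u -> knows L v ->
  knows L (fun j => u j + c * v j).
Proof.
move=> [cs1 [Hs1 Hu]] [cs2 [Hs2 Hv]].
exists (mkseq (fun i => cs1`_i + c * cs2`_i) (size L)); split; first by rewrite size_mkseq.
move=> j; rewrite Hu Hv mulr_sumr -big_split /=; apply: eq_bigr => i _.
by rewrite nth_mkseq // mulrDl mulrA.
Qed.

Lemma knows_scale L u c : knows L u -> knows L (fun j => c * u j).
Proof.
move=> H; apply: knows_ext (knows_lin c (knows0 L) H) _ => j.
by rewrite /vzero add0r.
Qed.

Lemma knows_rcons_l L v w : knows L w -> knows (rcons L v) w.
Proof.
move=> [cs [Hs Hw]]; exists (rcons cs 0); split; first by rewrite !size_rcons Hs.
move=> j; rewrite size_rcons big_ord_recr /= !nth_rcons Hs ltnn eqxx mul0r addr0 Hw.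
apply: eq_bigr => i _; by rewrite !nth_rcons Hs ltn_ord.
Qed.

Lemma knows_rcons_v L v : knows (rcons L v) v.
Proof.
exists (rcons (nseq (size L) 0) 1); split; first by rewrite !size_rcons size_nseq.
move=> j; rewrite size_rcons big_ord_recr /= !nth_rcons size_nseq !ltnn !eqxx mul1r big1 ?add0r //.
move=> i _; by rewrite nth_rcons size_nseq ltn_ord nth_nseq ltn_ord mul0r.
Qed.

Lemma knows_rcons_inv L v w : knows (rcons L v) w ->
  exists c, knows L (fun j => w j - c * v j).
Proof.
move=> [cs [Hs Hw]]; rewrite size_rcons in Hs.
exists cs`_(size L); exists (take (size L) cs); split.
  by rewrite size_take Hs ltnSn.
move=> j; rewrite Hw size_rcons big_ord_recr /= nth_rcons ltnn eqxx addrK.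
apply: eq_bigr => i _; by rewrite nth_rcons ltn_ord nth_take.
Qed.

Lemma knows_nth L i : (i < size L)%N -> knows L (nth vzero L i).
Proof.
move=> Hi; exists (mkseq (fun k => (k == i)%:R) (size L)); split; first by rewrite size_mkseq.
move=> j; rewrite (bigD1 (Ordinal Hi)) //= nth_mkseq // eqxx mul1r big1 ?addr0 //.
move=> k Hk; rewrite nth_mkseq //; case: eqP => [E|]; last by rewrite mul0r.
by move: Hk; rewrite -(inj_eq val_inj) /= E eqxx.
Qed.

Lemma knows_sum L (s : seq nat) (f : nat -> vec) :
  (forall k, k \in s -> knows L (f k)) -> knows L (fun j => \sum_(k <- s) f k j).
Proof.
elim: s => [|x s IH] H.
  apply: knows_ext (knows0 L) _ => j; by rewrite big_nil.
have Hx := H x (mem_head _ _).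
have Hs : knows L (fun j => \sum_(k <- s) f k j) by apply: IH => k Hk; apply: H; rewrite inE Hk orbT.
apply: knows_ext (knows_lin 1 Hs Hx) _ => j; by rewrite big_cons mul1r addrC.
Qed.

Definition bs (L : seq vec) (N : nat) :=
  forall i k, (i < size L)%N -> nth vzero L i k != 0 -> (1 <= k <= N)%N.

Lemma knows_bs L N w k : bs L N -> knows L w -> w k != 0 -> (1 <= k <= N)%N.
Proof.
move=> HB [cs [Hs Hw]]; rewrite Hw => Hne.
case: (boolP [exists i : 'I_(size L), nth vzero L i k != 0]).
  by move/existsP=> [i Hi]; exact: HB (ltn_ord i) Hi.
move/existsPn => Hall; move: Hne; rewrite big1 ?eqxx // => i _.
by move: (Hall i); rewrite negbK => /eqP ->; rewrite mulr0.
Qed.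

Lemma iso L N w q : bs L N -> knows L w -> w q != 0 ->
  (forall k, k != q -> w k != 0 -> knows L (unit_vec k)) -> knows L (unit_vec q).
Proof.
move=> HB Hw Hq Hk.
pose s := [seq k <- iota 0 N.+1 | k != q].
have Hs : knows L (fun j => \sum_(k <- s) (fun k j => w k * unit_vec k j) k j).
  apply: knows_sum => k; rewrite mem_filter => /andP [Hkq _].
  case: (eqVneq (w k) 0) => [E|Hne].
    by apply: knows_ext (knows0 L) _ => j; rewrite E mul0r.
  exact: knows_scale (Hk k Hkq Hne).
have H1 := knows_scale (w q)^-1 (knows_lin (-1) Hw Hs).
apply: knows_ext H1 _ => j /=.
have Hsum : \sum_(k <- s) w k * unit_vec k j =
   if (j != q) && (j <= N)%N then w j else 0.
  rewrite /s big_filter /unit_vec.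
  case: ifP => [/andP [Hjq HjN]|Hc].
    rewrite -big_filter (bigD1_seq j) ?filter_uniq ?iota_uniq ?mem_filter ?mem_iota ?add0n ?ltnS ?Hjq // eqxx mulr1 big1 => [|k Hkj]; last by rewrite eq_sym (negbTE Hkj) mulr0.
    exact: addr0.
  rewrite big_seq_cond big1 // => k /andP [Hki Hkq]; case: (eqVneq j k) => [E|]; last by rewrite mulr0.
  by move: Hc; rewrite E Hkq /=; move: Hki; rewrite mem_iota add0n ltnS => /andP [_ ->].
rewrite /= Hsum /unit_vec; case: (eqVneq j q) => [E|Hjq].
  by rewrite E /= mulr0 addr0 mulVf.
rewrite /=; case: ifP => HjN; first by rewrite mulN1r subrr mulr0.
have -> : w j = 0.
  apply/eqP; apply/negP => /negP Hne; move: (knows_bs HB Hw Hne) => /andP [_ H]; by rewrite H in HjN.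
by rewrite mulr0 addr0 mulr0.
Qed.

Lemma units_indep n : lin_indep (mkseq (fun i => unit_vec i.+1) n).
Proof.
move=> cs; rewrite size_mkseq => Hs H i0 Hi0.
move: (H i0.+1); rewrite (bigD1 (Ordinal Hi0)) //= nth_mkseq // /unit_vec eqxx mulr1 big1 ?addr0 //.
move=> i Hi; rewrite nth_mkseq // eqSS; case: eqP => [E|]; last by rewrite mulr0.
by move: Hi; rewrite -(inj_eq val_inj) /= E eqxx.
Qed.

Lemma rank_units L r n : is_rank L r ->
  (forall k, (1 <= k <= n)%N -> knows L (unit_vec k)) -> (n <= r)%N.
Proof.
move=> [_ H2] Hk; rewrite -(size_mkseq (fun i => unit_vec i.+1) n).
apply: H2; first exact: units_indep.
move=> i; rewrite size_mkseq => Hi; rewrite nth_mkseq //; apply: Hk; by rewrite ltnS Hi.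
Qed.

Definition Mat (B : seq vec) n : 'M[F3]_(size B, n) := \matrix_(i, j) (nth vzero B i) j.+1.

Lemma sum_Mat (B : seq vec) n (x : 'rV[F3]_(size B)) (j : 'I_n) :
  (x *m Mat B n) 0 j = \sum_(i < size B) x 0 i * nth vzero B i j.+1.
Proof. rewrite mxE; apply: eq_bigr => i _; by rewrite mxE. Qed.

Lemma bs_zero B n i j : bs B n -> (i < size B)%N -> (j == 0%N) || (n < j)%N -> nth vzero B i j = 0.
Proof.
move=> HB Hi Hj; apply/eqP; apply/negP => /negP Hne; move: (HB _ _ Hi Hne) => /andP [H1 H2].
case/orP: Hj => [/eqP E|Hj]; [by rewrite E in H1 | by rewrite ltnNge H2 in Hj].
Qed.

Lemma Mat_free B n : lin_indep B -> bs B n -> row_free (Mat B n).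
Proof.
move=> HI HB; rewrite -kermx_eq0; apply/eqP/row_matrixP => i; rewrite row0.
set x := row i (kermx (Mat B n)).
have Hx : x *m Mat B n = 0 by rewrite /x -row_mul mulmx_ker row0.
apply/rowP => k; rewrite [RHS]mxE.
pose cs := mkseq (fun i => x 0 (insubd k i)) (size B).
have Hcs : forall i : 'I_(size B), cs`_i = x 0 i.
  move=> i'; rewrite nth_mkseq //; congr (x 0 _); apply: val_inj; by rewrite val_insubd ltn_ord.
have := HI cs (size_mkseq _ _) _ k (ltn_ord k).
rewrite Hcs => -> //.
move=> j; under eq_bigr => i' _ do rewrite Hcs.
case: j => [|j].
  by rewrite big1 // => i' _; rewrite (bs_zero HB) ?mulr0.
case: (ltnP j n) => Hjn.
  by rewrite -(sum_Mat x (Ordinal Hjn)) Hx mxE.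
by rewrite big1 // => i' _; rewrite (bs_zero HB) ?mulr0 // ltnS Hjn orbT.
Qed.

Lemma indep_size B n : lin_indep B -> bs B n -> (size B <= n)%N.
Proof.
move=> HI HB; have := Mat_free HI HB; rewrite /row_free => /eqP <-; exact: rank_leq_col.
Qed.

Lemma indep_span L B n : lin_indep B -> bs B n -> size B = n ->
  (forall i, (i < size B)%N -> knows L (nth vzero B i)) ->
  forall k, (1 <= k <= n)%N -> knows L (unit_vec k).
Proof.
move=> HI HB Hsz HK [//|k] /andP [_ Hk].
have Hfull : row_full (Mat B n).
  by rewrite /row_full; have := Mat_free HI HB; rewrite /row_free => /eqP ->; rewrite Hsz.
have := submx_full (delta_mx (0:'I_1) (Ordinal Hk)) Hfull.
move=> /submxP [D HD].
have Hpos : (0 < size B)%N by rewrite Hsz (leq_ltn_trans _ Hk).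
pose o := Ordinal Hpos.
have Hsum : knows L (fun j => \sum_(i <- iota 0 (size B)) (fun i j => D 0 (insubd o i) * nth vzero B i j) i j).
  apply: knows_sum => i; rewrite mem_iota add0n => Hi; apply: knows_scale; exact: HK.
apply: knows_ext Hsum _ => j.
rewrite (_ : iota 0 (size B) = index_iota 0 (size B)); last by rewrite /index_iota subn0.
rewrite big_mkord.
have Hins : forall i : 'I_(size B), insubd o i = i.
  move=> i'; apply: val_inj; by rewrite val_insubd ltn_ord.
under eq_bigr => i _ do rewrite Hins.
case: j => [|j].
  by rewrite /unit_vec big1 // => i' _; rewrite (bs_zero HB) ?mulr0.
case: (ltnP j n) => Hjn.
  rewrite -(sum_Mat D (Ordinal Hjn)) -HD mxE /unit_vec /= eqSS eq_sym; by rewrite -(inj_eq val_inj) /= eq_sym.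
rewrite big1; last by move=> i' _; rewrite (bs_zero HB) ?mulr0 // ltnS Hjn orbT.
by rewrite /unit_vec eqSS; case: eqP => // E; move: (Hk); rewrite -E ltnNge Hjn.
Qed.

Definition bsv (v : vec) N := forall k, v k != 0 -> (1 <= k <= N)%N.
Definition clean L := forall k, heard L k -> decoded L k.

Lemma unit_vec_ne k j : (unit_vec k j != 0) = (j == k).
Proof. by rewrite /unit_vec; case: (j == k); rewrite ?oner_neq0 ?eqxx. Qed.

Lemma decoded_heard L k : decoded L k -> heard L k.
Proof. move=> [H1 H2]; split=> //; exists (unit_vec k); split=> //; by rewrite unit_vec_ne. Qed.

Lemma decoded_rcons L v k : decoded L k -> decoded (rcons L v) k.
Proof. move=> [H1 H2]; split=> //; exact: knows_rcons_l. Qed.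

Lemma heard_rcons_l L v k : heard L k -> heard (rcons L v) k.
Proof. move=> [H1 [w [H2 H3]]]; split=> //; exists w; split=> //; exact: knows_rcons_l. Qed.

Lemma heard_rcons L v k : heard (rcons L v) k -> heard L k \/ v k != 0.
Proof.
move=> [H1 [w [Hw Hk]]]; have [c Hc] := knows_rcons_inv Hw.
case: (eqVneq (v k) 0) => Hv; last by right.
left; split=> //; exists (fun j => w j - c * v j); split=> //; by rewrite Hv mulr0 subr0.
Qed.

Lemma bs_rcons L v N : bs L N -> bsv v N -> bs (rcons L v) N.
Proof.
move=> HL Hv i k; rewrite size_rcons ltnS leq_eqVlt => /orP [/eqP E|Hi].
  by rewrite E nth_rcons ltnn eqxx; apply: Hv.
by rewrite nth_rcons Hi; apply: HL.
Qed.

Lemma bs_mono L N N' : (N <= N')%N -> bs L N -> bs L N'.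
Proof. move=> HN H i k Hi Hk; move: (H i k Hi Hk) => /andP [-> H2]; exact: leq_trans H2 HN. Qed.

Lemma decode_one L N w q : bs L N -> knows L w -> w q != 0 ->
  (forall k, k != q -> w k != 0 -> decoded L k) -> decoded L q.
Proof.
move=> HB Hw Hq Hk; split; first by case/andP: (knows_bs HB Hw Hq).
apply: iso HB Hw Hq _ => k Hkq Hne; by case: (Hk k Hkq Hne).
Qed.

Lemma decode_rcons L N v q : bs L N -> bsv v N -> v q != 0 ->
  (forall k, k != q -> v k != 0 -> decoded L k) -> decoded (rcons L v) q.
Proof.
move=> HB Hv Hq Hk; apply: (decode_one (bs_rcons HB Hv) (knows_rcons_v L v) Hq).
move=> k Hkq Hne; apply: decoded_rcons; exact: Hk.
Qed.

Lemma no_single L N q : bs L N ->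
  (forall k, heard L k -> ~ decoded L k -> k = q) -> clean L.
Proof.
move=> HB Hu k Hk; apply: NNPP => Hnd.
have E := Hu k Hk Hnd; subst k.
case: Hk => [H1 [w [Hw Hq]]]; apply: Hnd.
apply: (decode_one HB Hw Hq) => k Hkq Hne; apply: NNPP => Hkd.
have Hh : heard L k by split; [case/andP: (knows_bs HB Hw Hne) | exists w].
by move: (Hu k Hh Hkd) => /eqP; rewrite (negbTE Hkq).
Qed.

Lemma clean_unsolved L : clean L <-> ~ unsolved_nonempty L.
Proof.
split; first by move=> H [k [Hh Hd]]; apply: Hd; exact: H.
move=> H k Hk; apply: NNPP => Hd; apply: H; by exists k.
Qed.

Lemma unsolved_rcons L v k : heard (rcons L v) k -> ~ decoded (rcons L v) k ->
  ~ decoded L k /\ (heard L k \/ v k != 0).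
Proof.
move=> Hh Hd; split; first by move=> H; apply: Hd; exact: decoded_rcons.
exact: heard_rcons.
Qed.

Lemma clean_knows L w k : clean L -> knows L w -> w k != 0 -> (1 <= k)%N -> decoded L k.
Proof. move=> Hc Hw Hk H1; apply: Hc; split=> //; by exists w. Qed.

Lemma not_heard_knows L w k : ~ heard L k -> knows L w -> w k != 0 -> (1 <= k)%N -> False.
Proof. move=> Hh Hw Hk H1; apply: Hh; split=> //; by exists w. Qed.

Lemma rank_dec L r n : is_rank L r -> (forall k, (1 <= k <= n)%N -> decoded L k) -> (n <= r)%N.
Proof. move=> HR Hd; apply: (rank_units HR) => k Hk; by case: (Hd k Hk). Qed.

Lemma unitE p q : unit_vec p q = (q == p)%:R.
Proof. by []. Qed.

Lemma nk_one L N v q : bs L N -> v q != 0 -> ~ decoded L q ->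
  (forall k, k != q -> v k != 0 -> decoded L k) -> ~ knows L v.
Proof. move=> HB Hq Hd Hk Hv; apply: Hd; exact: decode_one HB Hv Hq Hk. Qed.

Lemma nk_heard L v q : v q != 0 -> (1 <= q)%N -> ~ heard L q -> ~ knows L v.
Proof. move=> Hq H1 Hh Hv; apply: Hh; split=> //; by exists v. Qed.

Lemma nk_clean L v q : clean L -> v q != 0 -> (1 <= q)%N -> ~ decoded L q -> ~ knows L v.
Proof. move=> Hc Hq H1 Hd Hv; apply: Hd; apply: Hc; split=> //; by exists v. Qed.

Lemma supp_vadd u w k : vadd u w k != 0 -> u k != 0 \/ w k != 0.
Proof.
rewrite /vadd; case: (eqVneq (u k) 0) => [->|]; first by rewrite add0r; right.
by left.
Qed.

Lemma supp_vscale c u k : vscale c u k != 0 -> u k != 0.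
Proof. rewrite /vscale; case: (eqVneq (u k) 0) => [->|//]; by rewrite mulr0 eqxx. Qed.

Lemma supp_unit p k : unit_vec p k != 0 -> k = p.
Proof. by rewrite unit_vec_ne => /eqP. Qed.

Lemma decoded_unit_knows L p : knows L (unit_vec p) -> (1 <= p)%N -> decoded L p.
Proof. by move=> H1 H2; split. Qed.

Lemma oldP (P : nat -> Prop) k : oldest P k -> P k.
Proof. by case. Qed.

Lemma fo3 (A B C : nat -> Prop) p : first_oldest [:: A; B; C] p ->
  A p \/ (~ nonempty A /\ B p) \/ (~ nonempty A /\ ~ nonempty B /\ C p).
Proof.
rewrite /=; case=> [[_ [H _]]|[HA [[_ [H _]]|[HB [[_ [H _]]|[_ []]]]]]]; tauto.
Qed.

Definition UD L (v : vec) := exists q, forall k, v k != 0 -> ~ decoded L k -> k = q.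

Lemma UD_from L v q : (forall k, v k != 0 -> k = q \/ decoded L k) -> UD L v.
Proof. move=> H; exists q => k Hk Hd; by case: (H k Hk). Qed.

Lemma UD_unit L p : UD L (unit_vec p).
Proof. apply: (UD_from (q := p)) => k /supp_unit; by left. Qed.

Lemma supp2 j k q : vadd (unit_vec j) (unit_vec k) q != 0 -> q = j \/ q = k.
Proof. by case/supp_vadd => /supp_unit; auto. Qed.

Lemma val2l j k : j != k -> vadd (unit_vec j) (unit_vec k) j != 0.
Proof. move=> H; rewrite /vadd /unit_vec eqxx; move/negbTE: H => ->; by rewrite addr0 oner_neq0. Qed.

Lemma val2r j k : j != k -> vadd (unit_vec j) (unit_vec k) k != 0.
Proof. move=> H; rewrite /vadd /unit_vec eqxx; move: H; rewrite eq_sym => /negbTE ->; by []. Qed.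

Lemma bsv_unit p N : (1 <= p <= N)%N -> bsv (unit_vec p) N.
Proof. by move=> H k /supp_unit ->. Qed.

Lemma bsv2 j k N : (1 <= j <= N)%N -> (1 <= k <= N)%N -> bsv (vadd (unit_vec j) (unit_vec k)) N.
Proof. by move=> H1 H2 q /supp2 [->|->]. Qed.

Lemma unit_same p : unit_vec p p = 1.
Proof. by rewrite /unit_vec eqxx. Qed.

Lemma unit_diff p q : p != q -> unit_vec p q = 0.
Proof. by rewrite /unit_vec eq_sym => /negbTE ->. Qed.

Lemma supp3 M j k q : vadd (unit_vec M) (vadd (unit_vec j) (unit_vec k)) q != 0 -> [\/ q = M, q = j | q = k].
Proof. by case/supp_vadd => [/supp_unit ->|/supp2 [->|->]]; [apply: Or31|apply: Or32|apply: Or33]. Qed.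

Lemma supp2c M c p q : vadd (unit_vec M) (vscale c (unit_vec p)) q != 0 -> q = M \/ q = p.
Proof. by case/supp_vadd => [/supp_unit|/supp_vscale/supp_unit]; auto. Qed.

Lemma bsv3 M j k N : (1 <= M <= N)%N -> (1 <= j <= N)%N -> (1 <= k <= N)%N ->
  bsv (vadd (unit_vec M) (vadd (unit_vec j) (unit_vec k))) N.
Proof. by move=> H1 H2 H3 q /supp3 [->|->|->]. Qed.

Lemma bsv2c M c p N : (1 <= M <= N)%N -> (1 <= p <= N)%N ->
  bsv (vadd (unit_vec M) (vscale c (unit_vec p))) N.
Proof. by move=> H1 H2 q /supp2c [->|->]. Qed.

Lemma unit_diff' p q : q != p -> unit_vec p q = 0.
Proof. by rewrite /unit_vec => /negbTE ->. Qed.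

Ltac uv := rewrite /vadd /vscale /new_pkt;
  repeat (rewrite unit_same || match goal with H : is_true (?p != ?q) |- _ =>
            rewrite (unit_diff H) || rewrite (unit_diff' H) end);
  rewrite ?add0r ?addr0 ?mulr0 ?mulr1 ?oner_neq0.

Lemma coef_lemma L M p : knows L (vadd (unit_vec M) (vscale 1 (unit_vec p))) ->
  knows L (vadd (unit_vec M) (vscale 2%:R (unit_vec p))) -> knows L (unit_vec M).
Proof.
move=> H1 H2; apply: knows_ext (knows_lin (-1) (knows_scale 2%:R H1) H2) _ => j.
rewrite /vadd /vscale; ring.
Qed.

Lemma perm3 (l n d i : 'I_3) : l != n -> l != d -> n != d -> i = l \/ i = n \/ i = d.
Proof.
move=> H1 H2 H3.
suff: [|| i == l, i == n | i == d] by case/or3P=> /eqP; auto.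
move: l n d i H1 H2 H3; do 4 case=> [[|[|[|//]]] ?] //.
Qed.

Definition U5 (Li Lj : seq vec) k := heard Li k /\ ~ decoded Li k /\ ~ decoded Lj k.

Definition Inv (K : 'I_3 -> seq vec) (m : nat) :=
  [/\ (forall i, bs (K i) m.+1), (exists i, decoded_upto (K i) m), max_rank K m,
      (forall i j, i != j -> unsolved_nonempty (K i) -> unsolved_nonempty (K j) -> False) &
      (forall i j, i != j -> clean (K j) -> forall k1 k2, U5 (K i) (K j) k1 -> U5 (K i) (K j) k2 -> k1 = k2)].

Lemma max_rank_le K m i r : max_rank K m -> is_rank (K i) r -> (r <= m)%N.
Proof.
move=> [rr [Hr ->]] H.
have -> : r = rr i.
  case: H => [[B [HB1 [HB2 HB3]]] H2]; case: (Hr i) => [[B' [HB1' [HB2' HB3']]] H2'].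
  apply/eqP; rewrite eqn_leq; apply/andP; split.
    by rewrite -HB1; apply: H2'.
  by rewrite -HB1'; apply: H2.
exact: leq_bigmax.
Qed.

Lemma nodec_all K m i : max_rank K m -> ~ (forall k, (1 <= k <= m.+1)%N -> decoded (K i) k).
Proof.
move=> HM Hd; have [rr [Hr E]] := HM.
have := rank_dec (Hr i) Hd; have := max_rank_le HM (Hr i).
move=> H1 H2; have := leq_trans H2 H1; by rewrite ltnn.
Qed.

Section Slot.
Variables (K : 'I_3 -> seq vec) (a m : nat) (l n d : 'I_3).
Hypothesis HI : Inv K m.
Hypothesis HLab : valid_labels K m l n d.

Lemma Hln : l != n. Proof. by case: HLab => [H _]. Qed.
Lemma Hld : l != d. Proof. by case: HLab => _ [H _]. Qed.
Lemma Hnd : n != d. Proof. by case: HLab => _ [_ [H _]]. Qed.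
Lemma bsK i : bs (K i) m.+1. Proof. by case: HI. Qed.
Lemma HM : max_rank K m. Proof. by case: HI. Qed.
Lemma HL : decoded_upto (K l) m.
Proof. case: HI => _ Hex _ _ _; case: HLab => _ [_ [_ H]]; by case: (H Hex) => [[? _] _]. Qed.

Lemma nodec i : ~ (forall k, (1 <= k <= m.+1)%N -> decoded (K i) k).
Proof. exact: nodec_all HM. Qed.

Lemma knows_le i w k : knows (K i) w -> w k != 0 -> (1 <= k <= m.+1)%N.
Proof. move=> Hw Hk; exact: knows_bs (@bsK i) Hw Hk. Qed.

Lemma heard_le i k : heard (K i) k -> (1 <= k <= m.+1)%N.
Proof. by move=> [_ [w [Hw Hk]]]; apply: knows_le Hw Hk. Qed.

Lemma decoded_le i k : decoded (K i) k -> (1 <= k <= m.+1)%N.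
Proof. move=> H; apply: (@heard_le i); exact: decoded_heard. Qed.

Lemma cleanL : clean (K l).
Proof.
move=> k Hk; have /andP [H1 H2] := heard_le Hk.
case: (leqP k m) => Hkm; first by apply: HL; rewrite H1.
have Ek : k = m.+1 by apply/eqP; rewrite eqn_leq H2 Hkm.
case: Hk => _ [w [Hw Hwk]].
apply: (decode_one (@bsK l) Hw Hwk) => j Hj Hne.
have /andP [J1 J2] := knows_le Hw Hne; apply: HL; rewrite J1 /=.
by rewrite -ltnS; rewrite ltn_neqAle J2 andbT -Ek.
Qed.

Lemma cleanN : clean (K n).
Proof.
apply/clean_unsolved => Hn.
case: HI => _ Hex _ H4 _; case: HLab => _ [_ [_ H]]; case: (H Hex) => _ H'.
case: (classic (unsolved_nonempty (K d))) => Hd.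
  exact: H4 n d Hnd Hn Hd.
by apply Hd; apply: H' => E; apply Hd; apply E.
Qed.

Lemma S5uniq k1 k2 : S5 K n d k1 -> S5 K n d k2 -> k1 = k2.
Proof.
case: HI => _ _ _ _ H5 [[A1 A2] A3] [[B1 B2] B3].
have Hdn : d != n by rewrite eq_sym; exact: Hnd.
by apply: (H5 d n Hdn cleanN).
Qed.

Lemma innovL v : knows (K l) v -> bsv v m.+1 -> v m.+1 != 0 -> False.
Proof.
move=> Hv Hb Hm; apply: (nodec (i := l)) => k /andP [k1 k2].
case: (leqP k m) => Hkm; first by apply: HL; rewrite k1.
have -> : k = m.+1 by apply/eqP; rewrite eqn_leq k2 Hkm.
apply: (decode_one (@bsK l) Hv Hm) => j Hj Hne.
have /andP [J1 J2] := Hb j Hne; apply: HL; rewrite J1 /=.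
by rewrite -ltnS ltn_neqAle J2 andbT.
Qed.




Lemma setU_le k : Defs.setU a m k -> (1 <= k <= m.+1)%N.
Proof. case=> [/andP [-> H]|[-> _]] //=; exact: leqW. Qed.

Lemma S1_le k : S1 K n d k -> (1 <= k <= m.+1)%N. Proof. by case=> H _; exact: (@decoded_le n). Qed.
Lemma S2_le k : S2 K n d k -> (1 <= k <= m.+1)%N. Proof. by case=> H _; exact: (@decoded_le n). Qed.
Lemma S3_le k : S3 K n d k -> (1 <= k <= m.+1)%N. Proof. by case=> H _; exact: (@decoded_le n). Qed.
Lemma S4_le k : S4 K n d k -> (1 <= k <= m.+1)%N. Proof. by case=> H _; exact: (@decoded_le d). Qed.
Lemma S5_le k : S5 K n d k -> (1 <= k <= m.+1)%N. Proof. by case=> [[H _] _]; exact: (@heard_le d). Qed.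
Lemma S6_le k : S6 K a m n d k -> (1 <= k <= m.+1)%N. Proof. by case=> H _; exact: setU_le. Qed.

Lemma E456 : ~ nonempty (S4 K n d) -> ~ nonempty (S5 K n d) -> ~ nonempty (S6 K a m n d) ->
  forall k, Defs.setU a m k -> decoded (K n) k.
Proof.
move=> H4 H5 H6 k Hk; apply: NNPP => Hn.
case: (classic (decoded (K d) k)) => Hd; first by apply: H4; exists k.
case: (classic (heard (K d) k)) => Hh; first by apply: H5; exists k.
apply: H6; exists k; split=> //; by case.
Qed.

Lemma E2356 : ~ nonempty (S2 K n d) -> ~ nonempty (S3 K n d) -> ~ nonempty (S5 K n d) -> ~ nonempty (S6 K a m n d) ->
  forall k, Defs.setU a m k -> decoded (K d) k.
Proof.
move=> H2 H3 H5 H6 k Hk; apply: NNPP => Hd.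
case: (classic (heard (K d) k)) => Hh.
  case: (classic (decoded (K n) k)) => Hn; first by apply: H2; exists k.
  by apply: H5; exists k.
case: (classic (decoded (K n) k)) => Hn; first by apply: H3; exists k.
apply: H6; exists k; split=> //; by case.
Qed.

Lemma E236 : ~ nonempty (S2 K n d) -> ~ nonempty (S3 K n d) -> ~ nonempty (S6 K a m n d) ->
  clean (K d) /\ forall k, Defs.setU a m k -> decoded (K d) k.
Proof.
move=> H2 H3 H6.
have Hc : clean (K d).
  case: (classic (nonempty (S5 K n d))) => [[q Hq]|H5].
    apply: (no_single (q := q) (@bsK d)) => k Hh Hd.
    case: (classic (decoded (K n) k)) => Hn; first by exfalso; apply: H2; exists k.
    by apply: S5uniq.
  move=> k Hh; apply: NNPP => Hd.
  case: (classic (decoded (K n) k)) => Hn; first by apply: H2; exists k.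
  by apply: H5; exists k.
split=> // k Hk; apply: NNPP => Hd.
case: (classic (heard (K d) k)) => Hh; first by apply: Hd; apply: Hc.
case: (classic (decoded (K n) k)) => Hn; first by apply: H3; exists k.
apply: H6; exists k; split=> //; by case.
Qed.

Lemma cov1 i : ~ (m.+1 <= a)%N -> (forall k, Defs.setU a m k -> decoded (K i) k) -> decoded_upto (K i) a.
Proof.
move=> Ha H k /andP [k1 k2]; apply: H; left; rewrite k1 /=.
apply: leq_trans k2 _; rewrite leqNgt; exact/negP.
Qed.

Lemma cov2 i : (m.+1 <= a)%N -> (forall k, Defs.setU a m k -> decoded (K i) k) -> False.
Proof.
move=> Ha H; apply: (@nodec i) => k /andP [k1 k2]; apply: H.
case: (leqP k m) => Hk; first by left; rewrite k1.
by right; split=> //; apply/eqP; rewrite eqn_leq k2 Hk.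
Qed.

Notation S1' := (S1 K n d).
Notation S2' := (S2 K n d).
Notation S3' := (S3 K n d).
Notation S4' := (S4 K n d).
Notation S5' := (S5 K n d).
Notation S6' := (S6 K a m n d).
Notation ne := nonempty.

Lemma case1_spec y : case1 K a m n d y ->
  (exists j k, S2' j /\ S4' k /\ y = Some (vadd (unit_vec j) (unit_vec k)))
  \/ (exists j k, S3' j /\ S4' k /\ y = Some (vadd (unit_vec j) (unit_vec k)))
  \/ (exists p, (S5' p \/ (S6' p /\ ~ ne S5')) /\ y = Some (unit_vec p))
  \/ (exists p, (S2' p \/ S3' p) /\ ~ ne S4' /\ ~ ne S5' /\ ~ ne S6' /\ y = Some (unit_vec p))
  \/ (exists p, S4' p /\ ~ ne S2' /\ ~ ne S3' /\ ~ ne S5' /\ ~ ne S6' /\ y = Some (unit_vec p))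
  \/ (~ ne S2' /\ ~ ne S3' /\ ~ ne S4' /\ ~ ne S5' /\ ~ ne S6' /\ y = None).
Proof.
case=> [[_ [_ [j [k [Hj [Hk E]]]]]]|[[_ [_ [_ [j [k [Hj [Hk E]]]]]]]|[N24 [N34 [[p [Hp E]]|[Hall E]]]]]].
- left; exists j, k; split; [exact: oldP Hj|split; [exact: oldP Hk|done]].
- right; left; exists j, k; split; [exact: oldP Hj|split; [exact: oldP Hk|done]].
- move: Hp => /=.
  case=> [[_ [H _]]|[N5 [[_ [H _]]|[N6 [[_ [H _]]|[N2 [[_ [H _]]|[N3 [[_ [H _]]|[_ []]]]]]]]]]].
  + right; right; left; exists p; split=> //; by left.
  + right; right; left; exists p; split=> //; by right.
  + right; right; right; left; exists p; split; first by left.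
    have N4 : ~ ne S4' by move=> H4; apply: N24; split=> //; by exists p.
    done.
  + right; right; right; left; exists p; split; first by right.
    have N4 : ~ ne S4' by move=> H4; apply: N34; split=> //; by exists p.
    done.
  + right; right; right; right; left; exists p; done.
- right; right; right; right; right; move: Hall => /=; tauto.
Qed.

Definition Wk (v : vec) k := ~ decoded (K n) k /\ ~ decoded (K d) k /\ (heard (K d) k \/ v k != 0).
Definition Wu (v : vec) := forall k1 k2, Wk v k1 -> Wk v k2 -> k1 = k2.
Definition Q (v : vec) := bsv v m.+1 /\ (UD (K n) v \/ (clean (K d) /\ UD (K d) v)) /\ (UD (K d) v \/ Wu v).
Definition Good (x : option vec) := (forall i, ~ decoded_upto (K i) a -> exists v, x = Some v /\ ~ knows (K i) v)
   /\ (forall v, x = Some v -> Q v).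

Lemma W_b v p : (forall k, v k != 0 -> decoded (K n) k \/ decoded (K d) k \/ k = p) ->
  (S5' p \/ ~ ne S5') -> Wu v.
Proof.
move=> Hs H5.
have HW : forall k, Wk v k -> S5' k \/ k = p.
  move=> k [Hn [Hd [Hh|Hv]]]; first by left.
  by case: (Hs k Hv) => [//|[//|->]]; right.
move=> k1 k2 /HW H1 /HW H2.
case: H5 => [Hp|N5].
  have F : forall k, S5' k \/ k = p -> S5' k by move=> k [//|->].
  exact: S5uniq (F _ H1) (F _ H2).
case: H1 => [H|->]; first by exfalso; apply: N5; exists k1.
case: H2 => [H|->] //; by exfalso; apply: N5; exists k2.
Qed.

Lemma W_a v : (forall k, v k != 0 -> decoded (K n) k \/ decoded (K d) k) -> Wu v.
Proof.
move=> Hs; case: (classic (ne S5')) => [[p Hp]|N5].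
  apply: (W_b (p := p)); last by left.
  by move=> k /Hs [H|H]; [left|right; left].
apply: (W_b (p := 0)); last by right.
by move=> k /Hs [H|H]; [left|right; left].
Qed.

Lemma Q_unit p : (1 <= p <= m.+1)%N -> Q (unit_vec p).
Proof. move=> H; split; [exact: bsv_unit|split; left; exact: UD_unit]. Qed.

Lemma HLa : ~ (m.+1 <= a)%N -> decoded_upto (K l) a.
Proof.
move=> Ha k /andP [k1 k2]; apply: HL; rewrite k1 /=.
apply: leq_trans k2 _; rewrite leqNgt; exact/negP.
Qed.

Lemma S5_nd k : S5' k -> ~ decoded (K d) k. Proof. by case=> [[_ H] _]. Qed.
Lemma S6_nd k : S6' k -> ~ decoded (K d) k.
Proof. by case=> _ H Hd; apply: H; left; apply: decoded_heard. Qed.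
Lemma S6_nh k : S6' k -> ~ heard (K d) k. Proof. by case=> _ H Hd; apply: H; left. Qed.
Lemma S6_nn k : S6' k -> ~ decoded (K n) k. Proof. by case=> _ H Hd; apply: H; right. Qed.
Lemma S3_nd k : S3' k -> ~ decoded (K d) k.
Proof. by case=> _ H Hd; apply: H; apply: decoded_heard. Qed.

Lemma good1 x : ~ (m.+1 <= a)%N -> case1 K a m n d x -> Good x.
Proof.
move=> Ha Hc.
have Hi3 : forall i, ~ decoded_upto (K i) a -> i = n \/ i = d.
  move=> i Hi; case: (perm3 i Hln Hld Hnd) => [E|[E|E]]; [|by left|by right].
  by exfalso; apply: Hi; rewrite E; apply: HLa.
case: (case1_spec Hc) => [[j [k [Hj [Hk ->]]]]|[[j [k [Hj [Hk ->]]]]|[[p [Hp ->]]|[[p [Hp [N4 [N5 [N6 ->]]]]]|[[p [Hp [N2 [N3 [N5 [N6 ->]]]]]]|[N2 [N3 [N4 [N5 [N6 ->]]]]]]]]]].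
- have Hjk : j != k by apply/eqP => E; case: Hj => Hn _; case: Hk => _ Hk'; apply: Hk'; rewrite -E.
  split.
    move=> i Hi; case: (Hi3 i Hi) => E; subst i; (eexists; split; [reflexivity|]).
      apply: (nk_clean cleanN (val2r Hjk)); first by case/andP: (S4_le Hk).
      by case: Hk.
    apply: (nk_one (@bsK d) (val2l Hjk)); first by case: Hj => _ [].
    move=> q Hq /supp2 [E|->]; first by rewrite E eqxx in Hq.
    by case: Hk.
  move=> v [<-]; split; first exact: bsv2 (S2_le Hj) (S4_le Hk).
  split; first by left; apply: (UD_from (q := k)) => q /supp2 [->|->]; [right; case: Hj|left].
  right; apply: W_a.
  move=> q /supp2 [->|->]; [left; by case: Hj|right; by case: Hk].
- have Hjk : j != k by apply/eqP => E; case: Hj => Hn _; case: Hk => _ Hk'; apply: Hk'; rewrite -E.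
  split.
    move=> i Hi; case: (Hi3 i Hi) => E; subst i; (eexists; split; [reflexivity|]).
      apply: (nk_clean cleanN (val2r Hjk)); first by case/andP: (S4_le Hk).
      by case: Hk.
    apply: (nk_one (@bsK d) (val2l Hjk)); first exact: S3_nd.
    move=> q Hq /supp2 [E|->]; first by rewrite E eqxx in Hq.
    by case: Hk.
  move=> v [<-]; split; first exact: bsv2 (S3_le Hj) (S4_le Hk).
  split; first by left; apply: (UD_from (q := k)) => q /supp2 [->|->]; [right; case: Hj|left].
  right; apply: W_a.
  move=> q /supp2 [->|->]; [left; by case: Hj|right; by case: Hk].
- have Hp1 : (1 <= p <= m.+1)%N by case: Hp => [/S5_le|[/S6_le]].
  have Hpn : ~ decoded (K n) p by case: Hp => [[_ H]|[/S6_nn]].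
  have Hpd : ~ decoded (K d) p by case: Hp => [/S5_nd|[/S6_nd]].
  split; last by move=> v [<-]; apply: Q_unit.
  move=> i Hi; case: (Hi3 i Hi) => E; subst i; (eexists; split; [reflexivity|]).
    apply: (nk_clean cleanN (q := p)); [by rewrite unit_vec_ne|by case/andP: Hp1|done].
  apply: (nk_one (@bsK d) (q := p)); [by rewrite unit_vec_ne|done|].
  by move=> q Hq /supp_unit E; rewrite E eqxx in Hq.
- have Hp1 : (1 <= p <= m.+1)%N by case: Hp => [/S2_le|/S3_le].
  have Hpd : ~ decoded (K d) p by case: Hp => [[_ [_ H]]|/S3_nd].
  split; last by move=> v [<-]; apply: Q_unit.
  move=> i Hi; case: (Hi3 i Hi) => E; subst i.
    by exfalso; apply: Hi; apply: cov1 => //; apply: E456.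
  (eexists; split; [reflexivity|]).
  apply: (nk_one (@bsK d) (q := p)); [by rewrite unit_vec_ne|done|].
  by move=> q Hq /supp_unit E; rewrite E eqxx in Hq.
- have Hp1 : (1 <= p <= m.+1)%N by apply: S4_le.
  split; last by move=> v [<-]; apply: Q_unit.
  move=> i Hi; case: (Hi3 i Hi) => E; subst i.
    (eexists; split; [reflexivity|]).
    apply: (nk_clean cleanN (q := p)); [by rewrite unit_vec_ne|by case/andP: Hp1|by case: Hp].
  by exfalso; apply: Hi; apply: cov1 => //; apply: E2356.
- split=> // i Hi; case: (Hi3 i Hi) => E; subst i; exfalso; apply: Hi; apply: cov1 => //; [exact: E456|exact: E2356].
Qed.

Lemma M_le : (1 <= m.+1 <= m.+1)%N. Proof. by rewrite leqnn. Qed.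

Lemma innovL' v : (m.+1 <= a)%N -> bsv v m.+1 -> v m.+1 != 0 ->
  ~ knows (K l) v.
Proof. move=> _ Hb Hm Hk; exact: innovL Hk Hb Hm. Qed.

Lemma good2 x : (m.+1 <= a)%N -> S1' m.+1 ->
  (exists y, case1 K a m n d y /\
        x = Some (match y with Some v => vadd (new_pkt m) v | None => new_pkt m end)) -> Good x.
Proof.
move=> Ha [HMn HMd] [y [Hc ->]]; rewrite /new_pkt.
have Hi3 : forall i, i = l \/ i = n \/ i = d by move=> i; exact: perm3 Hln Hld Hnd.
case: (case1_spec Hc) => [[j [k [Hj [Hk ->]]]]|[[j [k [Hj [Hk ->]]]]|[[p [Hp ->]]|[[p [Hp [N4 [N5 [N6 ->]]]]]|[[p [Hp [N2 [N3 [N5 [N6 ->]]]]]]|[N2 [N3 [N4 [N5 [N6 ->]]]]]]]]]].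
- have Hjk : j != k by apply/eqP => E; case: Hj => Hn _; case: Hk => _ Hk'; apply: Hk'; rewrite -E.
  have HjM : m.+1 != j by apply/eqP => E; case: Hj => _ [_]; rewrite -E.
  have HkM : m.+1 != k by apply/eqP => E; case: Hk => _; rewrite -E.
  have Hb : bsv (vadd (unit_vec m.+1) (vadd (unit_vec j) (unit_vec k))) m.+1 by apply: bsv3 M_le (S2_le Hj) (S4_le Hk).
  split.
    move=> i Hi; (eexists; split; [reflexivity|]).
    case: (Hi3 i) => [->|[->|->]].
    + apply: innovL' Ha Hb _; by uv.
    + apply: (nk_clean cleanN (q := k)); last by case: Hk.
        by uv.
      by case/andP: (S4_le Hk).
    + have Hv : vadd (unit_vec m.+1) (vadd (unit_vec j) (unit_vec k)) j != 0.
        by uv.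
      apply: (nk_one (@bsK d) Hv); first by case: Hj => _ [].
      move=> q Hq /supp3 [E|E|E]; subst q => //; [by rewrite eqxx in Hq|by case: Hk].
  move=> v [<-]; split=> //.
  split; first by left; apply: (UD_from (q := k)) => q /supp3 [->|->|->]; [right|right; case: Hj|left].
  right; apply: W_a => q /supp3 [->|->|->]; [by left|by left; case: Hj|right; by case: Hk].
- have Hjk : j != k by apply/eqP => E; case: Hj => Hn _; case: Hk => _ Hk'; apply: Hk'; rewrite -E.
  have HjM : m.+1 != j by apply/eqP => E; apply: (S3_nd Hj); rewrite -E.
  have HkM : m.+1 != k by apply/eqP => E; case: Hk => _; rewrite -E.
  have Hb : bsv (vadd (unit_vec m.+1) (vadd (unit_vec j) (unit_vec k))) m.+1 by apply: bsv3 M_le (S3_le Hj) (S4_le Hk).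
  split.
    move=> i Hi; (eexists; split; [reflexivity|]).
    case: (Hi3 i) => [->|[->|->]].
    + apply: innovL' Ha Hb _; by uv.
    + apply: (nk_clean cleanN (q := k)); last by case: Hk.
        by uv.
      by case/andP: (S4_le Hk).
    + have Hv : vadd (unit_vec m.+1) (vadd (unit_vec j) (unit_vec k)) j != 0.
        by uv.
      apply: (nk_one (@bsK d) Hv); first exact: S3_nd.
      move=> q Hq /supp3 [E|E|E]; subst q => //; [by rewrite eqxx in Hq|by case: Hk].
  move=> v [<-]; split=> //.
  split; first by left; apply: (UD_from (q := k)) => q /supp3 [->|->|->]; [right|right; case: Hj|left].
  right; apply: W_a => q /supp3 [->|->|->]; [by left|by left; case: Hj|right; by case: Hk].
- have Hp1 : (1 <= p <= m.+1)%N by case: Hp => [/S5_le|[/S6_le]].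
  have Hpn : ~ decoded (K n) p by case: Hp => [[_ H]|[/S6_nn]].
  have Hpd : ~ decoded (K d) p by case: Hp => [/S5_nd|[/S6_nd]].
  have HpM : m.+1 != p by apply/eqP => E; apply: Hpn; rewrite -E.
  have Hb := bsv2 M_le Hp1.
  split.
    move=> i Hi; (eexists; split; [reflexivity|]).
    case: (Hi3 i) => [->|[->|->]].
    + apply: innovL' Ha Hb _; exact: val2l.
    + apply: (nk_clean cleanN (val2r HpM)) => //; by case/andP: Hp1.
    + apply: (nk_one (@bsK d) (val2r HpM)) => // q Hq /supp2 [->|E] //; by rewrite E eqxx in Hq.
  move=> v [<-]; split=> //.
  split; first by left; apply: (UD_from (q := p)) => q /supp2 [->|->]; [right|left].
  by left; apply: (UD_from (q := p)) => q /supp2 [->|->]; [right|left].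
- have Hp1 : (1 <= p <= m.+1)%N by case: Hp => [/S2_le|/S3_le].
  have Hpd : ~ decoded (K d) p by case: Hp => [[_ [_ H]]|/S3_nd].
  have HpM : m.+1 != p by apply/eqP => E; apply: Hpd; rewrite -E.
  have Hb := bsv2 M_le Hp1.
  split.
    move=> i Hi; case: (Hi3 i) => [->|[->|->]].
    + (eexists; split; [reflexivity|]); apply: innovL' Ha Hb _; exact: val2l.
    + by exfalso; apply: (@cov2 n) => //; apply: E456.
    + (eexists; split; [reflexivity|]).
      apply: (nk_one (@bsK d) (val2r HpM)) => // q Hq /supp2 [->|E] //; by rewrite E eqxx in Hq.
  move=> v [<-]; split=> //.
  split; first by left; apply: (UD_from (q := p)) => q /supp2 [->|->]; [right|left].
  by left; apply: (UD_from (q := p)) => q /supp2 [->|->]; [right|left].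
- have Hp1 : (1 <= p <= m.+1)%N by apply: S4_le.
  have HpM : m.+1 != p by apply/eqP => E; case: Hp => _; rewrite -E.
  have Hb := bsv2 M_le Hp1.
  split.
    move=> i Hi; case: (Hi3 i) => [->|[->|->]].
    + (eexists; split; [reflexivity|]); apply: innovL' Ha Hb _; exact: val2l.
    + (eexists; split; [reflexivity|]).
      apply: (nk_clean cleanN (val2r HpM)); [by case/andP: Hp1|by case: Hp].
    + by exfalso; apply: (@cov2 d) => //; apply: E2356.
  move=> v [<-]; split=> //.
  split; first by left; apply: (UD_from (q := p)) => q /supp2 [->|->]; [right|left].
  by left; apply: (UD_from (q := p)) => q /supp2 [->|->]; [right|right; case: Hp].
- split; last by move=> v [<-]; apply: Q_unit M_le.
  move=> i Hi; case: (Hi3 i) => [->|[->|->]].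
  + (eexists; split; [reflexivity|]); apply: innovL' Ha (bsv_unit M_le) _; by rewrite unit_same oner_neq0.
  + by exfalso; apply: (@cov2 n) => //; apply: E456.
  + by exfalso; apply: (@cov2 d) => //; apply: E2356.
Qed.

Lemma cleanD2 : ~ ne S2' -> clean (K d).
Proof.
move=> H2; case: (classic (nonempty (S5 K n d))) => [[q Hq]|H5].
  apply: (no_single (q := q) (@bsK d)) => k Hh Hd.
  case: (classic (decoded (K n) k)) => Hn; first by exfalso; apply: H2; exists k.
  by apply: S5uniq.
move=> k Hh; apply: NNPP => Hd.
case: (classic (decoded (K n) k)) => Hn; first by apply: H2; exists k.
by apply: H5; exists k.
Qed.

Lemma two_ne0 : (2%:R : F3) != 0. Proof. by []. Qed.

Lemma good3 x : (m.+1 <= a)%N -> S2' m.+1 ->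
      ((exists p c, first_oldest [:: S4'; S5'; S6'] p /\ coef_ok K m n d p c /\
          x = Some (vadd (new_pkt m) (vscale c (unit_vec p))))
       \/ (all_empty [:: S4'; S5'; S6'] /\ x = Some (new_pkt m))) -> Good x.
Proof.
move=> Ha [HMn [HMh HMd]]; rewrite /new_pkt.
have Hi3 : forall i, i = l \/ i = n \/ i = d by move=> i; exact: perm3 Hln Hld Hnd.
case=> [[p [c [Hfo [[Hc1 Hc2] ->]]]]|[[N4 [N5 [N6 _]]] ->]].
- have Hp1 : (1 <= p <= m.+1)%N by case: (fo3 Hfo) => [/S4_le|[[_ /S5_le]|[_ [_ /S6_le]]]].
  have Hpn : ~ decoded (K n) p by case: (fo3 Hfo) => [[_ H]|[[_ [_ H]]|[_ [_ /S6_nn]]]].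
  have HpM : m.+1 != p by apply/eqP => E; apply: Hpn; rewrite -E.
  have Hc0 : c != 0.
    case: (classic (S5' p)) => H5; last by rewrite (Hc1 H5) oner_neq0.
    by case: (Hc2 H5) => [[->|->] _]; [rewrite oner_neq0|exact: two_ne0].
  have Hb := bsv2c (c := c) M_le Hp1.
  have HvM : vadd (unit_vec m.+1) (vscale c (unit_vec p)) m.+1 != 0 by uv.
  have Hvp : vadd (unit_vec m.+1) (vscale c (unit_vec p)) p != 0 by uv.
  split.
    move=> i Hi; (eexists; split; [reflexivity|]).
    case: (Hi3 i) => [->|[->|->]].
    + exact: innovL' Ha Hb HvM.
    + apply: (nk_clean cleanN Hvp) => //; by case/andP: Hp1.
    + case: (fo3 Hfo) => [H4|[[N4 H5]|[N4 [N5 H6]]]].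
      * apply: (nk_one (@bsK d) HvM) => // q Hq /supp2c [E|E]; first by rewrite E eqxx in Hq.
        by rewrite E; case: H4.
      * move=> Hk; apply: HMd; split=> //; apply: (coef_lemma (p := p)).
          apply: NNPP => Hn1; have [_ H] := Hc2 H5; apply: H Hk; exists 1; split=> //; by left.
        apply: NNPP => Hn1; have [_ H] := Hc2 H5; apply: H Hk; exists 2%:R; split=> //; by right.
      * apply: (nk_heard Hvp); [by case/andP: Hp1|exact: S6_nh].
  move=> v [<-]; split=> //.
  split; first by left; apply: (UD_from (q := p)) => q /supp2c [->|->]; [right|left].
  right; case: (fo3 Hfo) => [H4|[[N4 H5]|[N4 [N5 H6]]]].
  + apply: W_a => q /supp2c [->|->]; [by left|right; by case: H4].
  + apply: (W_b (p := p)); last by left.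
    move=> q /supp2c [->|->]; [by left|by right; right].
  + apply: (W_b (p := p)); last by right.
    move=> q /supp2c [->|->]; [by left|by right; right].
- split; last by move=> v [<-]; apply: Q_unit M_le.
  move=> i Hi; case: (Hi3 i) => [->|[->|->]].
  + (eexists; split; [reflexivity|]); apply: innovL' Ha (bsv_unit M_le) _; by rewrite unit_same oner_neq0.
  + by exfalso; apply: (@cov2 n) => //; apply: E456.
  + (eexists; split; [reflexivity|]).
    apply: (nk_one (@bsK d) (q := m.+1)) => //; first by rewrite unit_same oner_neq0.
    by move=> q Hq /supp_unit E; rewrite E eqxx in Hq.
Qed.

Lemma good4 x : (m.+1 <= a)%N -> S3' m.+1 -> send_with m [:: S4'; S5'; S6'] x -> Good x.
Proof.
move=> Ha [HMn HMh]; rewrite /send_with /new_pkt.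
have Hi3 : forall i, i = l \/ i = n \/ i = d by move=> i; exact: perm3 Hln Hld Hnd.
case=> [[p [Hfo ->]]|[[N4 [N5 [N6 _]]] ->]].
- have Hp1 : (1 <= p <= m.+1)%N by case: (fo3 Hfo) => [/S4_le|[[_ /S5_le]|[_ [_ /S6_le]]]].
  have Hpn : ~ decoded (K n) p by case: (fo3 Hfo) => [[_ H]|[[_ [_ H]]|[_ [_ /S6_nn]]]].
  have HpM : m.+1 != p by apply/eqP => E; apply: Hpn; rewrite -E.
  have Hb := bsv2 M_le Hp1.
  split.
    move=> i Hi; (eexists; split; [reflexivity|]).
    case: (Hi3 i) => [->|[->|->]].
    + exact: innovL' Ha Hb (val2l HpM).
    + apply: (nk_clean cleanN (val2r HpM)) => //; by case/andP: Hp1.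
    + exact: (nk_heard (val2l HpM)).
  move=> v [<-]; split=> //.
  split; first by left; apply: (UD_from (q := p)) => q /supp2 [->|->]; [right|left].
  right; case: (fo3 Hfo) => [H4|[[N4 H5]|[N4 [N5 H6]]]].
  + apply: W_a => q /supp2 [->|->]; [by left|right; by case: H4].
  + apply: (W_b (p := p)); last by left.
    move=> q /supp2 [->|->]; [by left|by right; right].
  + apply: (W_b (p := p)); last by right.
    move=> q /supp2 [->|->]; [by left|by right; right].
- split; last by move=> v [<-]; apply: Q_unit M_le.
  move=> i Hi; case: (Hi3 i) => [->|[->|->]].
  + (eexists; split; [reflexivity|]); apply: innovL' Ha (bsv_unit M_le) _; by rewrite unit_same oner_neq0.
  + by exfalso; apply: (@cov2 n) => //; apply: E456.
  + (eexists; split; [reflexivity|]).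
    by apply: (nk_heard (q := m.+1)) => //; rewrite unit_same oner_neq0.
Qed.

Lemma good5 x : (m.+1 <= a)%N -> S4' m.+1 -> send_with m [:: S2'; S3'; S6'] x -> Good x.
Proof.
move=> Ha [HMd HMn]; rewrite /send_with /new_pkt.
have Hi3 : forall i, i = l \/ i = n \/ i = d by move=> i; exact: perm3 Hln Hld Hnd.
case=> [[p [Hfo ->]]|[[N2 [N3 [N6 _]]] ->]].
- have Hp1 : (1 <= p <= m.+1)%N by case: (fo3 Hfo) => [/S2_le|[[_ /S3_le]|[_ [_ /S6_le]]]].
  have Hpd : ~ decoded (K d) p by case: (fo3 Hfo) => [[_ [_ H]]|[[_ /S3_nd]|[_ [_ /S6_nd]]]].
  have HpM : m.+1 != p by apply/eqP => E; apply: Hpd; rewrite -E.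
  have Hb := bsv2 M_le Hp1.
  have HUD : UD (K d) (vadd (unit_vec m.+1) (unit_vec p)).
    by apply: (UD_from (q := p)) => q /supp2 [->|->]; [right|left].
  split.
    move=> i Hi; (eexists; split; [reflexivity|]).
    case: (Hi3 i) => [->|[->|->]].
    + exact: innovL' Ha Hb (val2l HpM).
    + apply: (nk_clean cleanN (val2l HpM)) => //.
    + apply: (nk_one (@bsK d) (val2r HpM)) => // q Hq /supp2 [E|E]; last by rewrite E eqxx in Hq.
      by rewrite E.
  move=> v [<-]; split=> //; split; last by left.
  case: (fo3 Hfo) => [H2|[[N2 H3]|[N2 [N3 H6]]]].
  + by left; apply: (UD_from (q := m.+1)) => q /supp2 [->|->]; [left|right; case: H2].
  + by left; apply: (UD_from (q := m.+1)) => q /supp2 [->|->]; [left|right; case: H3].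
  + by right; split=> //; apply: cleanD2.
- split; last by move=> v [<-]; apply: Q_unit M_le.
  move=> i Hi; case: (Hi3 i) => [->|[->|->]].
  + (eexists; split; [reflexivity|]); apply: innovL' Ha (bsv_unit M_le) _; by rewrite unit_same oner_neq0.
  + (eexists; split; [reflexivity|]).
    by apply: (nk_clean cleanN (q := m.+1)) => //; rewrite unit_same oner_neq0.
  + by exfalso; apply: (@cov2 d) => //; case: (E236 N2 N3 N6).
Qed.

Lemma good6 x : (m.+1 <= a)%N -> ~ S1' m.+1 -> ~ S2' m.+1 -> ~ S3' m.+1 -> ~ S4' m.+1 ->
  x = Some (new_pkt m) -> Good x.
Proof.
move=> Ha N1 N2 N3 N4 ->; rewrite /new_pkt.
have Hi3 : forall i, i = l \/ i = n \/ i = d by move=> i; exact: perm3 Hln Hld Hnd.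
have Hn : ~ decoded (K n) m.+1.
  move=> Hn; case: (classic (decoded (K d) m.+1)) => Hd; first by apply: N1.
  case: (classic (heard (K d) m.+1)) => Hh; first by apply: N2.
  by apply: N3.
have Hd : ~ decoded (K d) m.+1 by move=> Hd; apply: N4.
split; last by move=> v [<-]; apply: Q_unit M_le.
move=> i Hi; (eexists; split; [reflexivity|]); case: (Hi3 i) => [->|[->|->]].
+ apply: innovL' Ha (bsv_unit M_le) _; by rewrite unit_same oner_neq0.
+ by apply: (nk_clean cleanN (q := m.+1)) => //; rewrite unit_same oner_neq0.
+ apply: (nk_one (@bsK d) (q := m.+1)) => //; first by rewrite unit_same oner_neq0.
  by move=> q Hq /supp_unit E; rewrite E eqxx in Hq.
Qed.

Lemma good x : tx_rule K a m n d x -> Good x.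
Proof.
case=> [[Ha Hc]|[[Ha [H1 H]]|[[Ha [H2 H]]|[[Ha [H3 H]]|[[Ha [H4 H]]|[Ha [N1 [N2 [N3 [N4 H]]]]]]]]]].
- apply: good1 Ha Hc.
- exact: good2.
- exact: good3.
- exact: good4.
- exact: good5.
- exact: good6.
Qed.

Section Pres.
Variables (v : vec) (K' : 'I_3 -> seq vec) (m' : nat).
Hypothesis HQ : Q v.
Hypothesis HK' : forall i, K' i = K i \/ K' i = rcons (K i) v.
Hypothesis HM' : max_rank K' m'.

Lemma Hbv : bsv v m.+1. Proof. by case: HQ. Qed.

Lemma bsK' i : bs (K' i) m.+1.
Proof. case: (HK' i) => ->; [exact: bsK|exact: bs_rcons (@bsK i) Hbv]. Qed.

Lemma dec' i k : decoded (K i) k -> decoded (K' i) k.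
Proof. case: (HK' i) => -> //; exact: decoded_rcons. Qed.

Lemma U_after i k : heard (K' i) k -> ~ decoded (K' i) k ->
  ~ decoded (K i) k /\ (heard (K i) k \/ v k != 0).
Proof.
case: (HK' i) => -> Hh Hd; first by split=> //; left.
exact: unsolved_rcons.
Qed.

Lemma U_after_UD i k : UD (K i) v -> heard (K' i) k -> ~ decoded (K' i) k ->
  heard (K i) k /\ ~ decoded (K i) k.
Proof.
move=> [q Hq]; case: (HK' i) => -> Hh Hd; first by [].
have [Hnd [Hh0|Hv]] := unsolved_rcons Hh Hd; first by [].
exfalso; have E := Hq k Hv Hnd; subst k.
apply: Hd; apply: (decode_rcons (@bsK i) Hbv Hv) => k Hk Hvk.
apply: NNPP => Hn; by move: (Hq k Hvk Hn) => E'; rewrite E' eqxx in Hk.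
Qed.

Lemma clean' i : clean (K i) -> UD (K i) v -> clean (K' i).
Proof.
move=> Hc HU k Hh; apply: NNPP => Hd; have [H1 H2] := U_after_UD HU Hh Hd.
by apply: H2; apply: Hc.
Qed.

Lemma UDL : UD (K l) v.
Proof.
apply: (UD_from (q := m.+1)) => k Hk; have /andP [k1 k2] := Hbv Hk.
case: (leqP k m) => Hkm; first by right; apply: HL; rewrite k1.
by left; apply/eqP; rewrite eqn_leq k2 Hkm.
Qed.

Lemma cleanL' : clean (K' l). Proof. exact: clean' cleanL UDL. Qed.

Lemma cleanND' : clean (K' n) \/ clean (K' d).
Proof.
case: HQ => _ [[HU|[Hc HU]] _]; [left; exact: clean' cleanN HU|right; exact: clean' Hc HU].
Qed.

Lemma m_le : (m <= m')%N.
Proof.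
have [rr [Hr E]] := HM'; rewrite E; apply: leq_trans (leq_bigmax l).
apply: (rank_dec (Hr l)) => k Hk; apply: dec'; exact: HL.
Qed.

Lemma P1 i : bs (K' i) m'.+1.
Proof. apply: bs_mono (@bsK' i); by rewrite ltnS m_le. Qed.

Lemma P2 : exists i, decoded_upto (K' i) m'.
Proof.
case: (leqP m' m) => Hm.
  exists l => k /andP [k1 k2]; apply: dec'; apply: HL; rewrite k1; exact: leq_trans k2 Hm.
have [rr [Hr E]] := HM'.
have [i0 Hi0] := eq_bigmax rr (ltac:(by rewrite card_ord) : (0 < #|'I_3|)%N).
exists i0; have [[B [HB1 [HB2 HB3]]] _] := Hr i0.
have HBb : bs B m.+1.
  move=> i k Hi Hk; exact: knows_bs (@bsK' i0) (HB3 i Hi) Hk.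
have Hsz : size B = m.+1.
  apply/eqP; rewrite eqn_leq (indep_size HB2 HBb) /= HB1.
  by rewrite -Hi0 -E.
have Em : m' = m.+1 by rewrite E Hi0 -HB1 Hsz.
move=> k Hk; split; first by case/andP: Hk.
apply: (indep_span HB2 HBb Hsz HB3); by rewrite -Em.
Qed.

Lemma P4 i j : i != j -> unsolved_nonempty (K' i) -> unsolved_nonempty (K' j) -> False.
Proof.
move=> Hij Hi Hj.
have Cl := cleanL'; have Cnd := cleanND'.
have C : forall k, clean (K' k) -> unsolved_nonempty (K' k) -> False.
  by move=> k /clean_unsolved.
case: (perm3 i Hln Hld Hnd) => Ei; case: (perm3 j Hln Hld Hnd) => Ej; subst.
all: try (by apply: (C _ Cl)).
all: move: Ei Ej => [Ei|Ei] [Ej|Ej]; subst; try by rewrite eqxx in Hij.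
all: by case: Cnd => Hc; [apply: (C _ Hc)|apply: (C _ Hc)].
Qed.

Lemma Hjl i k : U5 (K' i) (K' l) k -> k = m.+1.
Proof.
move=> [[k1 [w [Hw Hk]]] [_ Hd]].
have /andP [_ k2] := knows_bs (@bsK' i) Hw Hk.
case: (leqP k m) => Hkm; last by apply/eqP; rewrite eqn_leq k2 Hkm.
by exfalso; apply: Hd; apply: dec'; apply: HL; rewrite k1.
Qed.

Lemma Hnd_case : (exists q, forall k, U5 (K' n) (K' d) k -> k = q).
Proof.
case: HQ => _ [[HU|[Hc [q Hq]]] _].
  exists 0 => k [Hh [Hd _]]; exfalso; apply: Hd; exact: clean' cleanN HU k Hh.
exists q => k [Hh [Hd Hdd]]; have [Hnn [Hh0|Hv]] := U_after Hh Hd.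
  by exfalso; apply: Hnn; apply: cleanN.
apply: (Hq k Hv) => H; apply: Hdd; exact: dec'.
Qed.

Lemma Hdn_case k1 k2 : U5 (K' d) (K' n) k1 -> U5 (K' d) (K' n) k2 -> k1 = k2.
Proof.
case: HQ => _ [_ [HU|HW]].
  have F : forall k, U5 (K' d) (K' n) k -> S5' k.
    move=> k [Hh [Hd Hn]]; have [H1 H2] := U_after_UD HU Hh Hd.
    split=> //; by move=> H; apply: Hn; apply: dec'.
  by move=> /F H1 /F H2; apply: S5uniq.
have F : forall k, U5 (K' d) (K' n) k -> Wk v k.
  move=> k [Hh [Hd Hn]]; have [H1 H2] := U_after Hh Hd.
  split; first by move=> H; apply: Hn; apply: dec'.
  by split.
by move=> /F H1 /F H2; apply: HW.
Qed.

Lemma P5 i j : i != j -> clean (K' j) -> forall k1 k2,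
  U5 (K' i) (K' j) k1 -> U5 (K' i) (K' j) k2 -> k1 = k2.
Proof.
move=> Hij Hcj k1 k2 H1 H2.
case: (perm3 i Hln Hld Hnd) => Ei; [subst i|].
  by exfalso; case: H1 => [Hh [Hd _]]; apply: Hd; apply: cleanL'.
case: (perm3 j Hln Hld Hnd) => Ej; [subst j|].
  by rewrite (Hjl H1) (Hjl H2).
move: Ei Ej => [Ei|Ei] [Ej|Ej]; subst; try by rewrite eqxx in Hij.
  by have [q Hq] := Hnd_case; rewrite (Hq _ H1) (Hq _ H2).
exact: Hdn_case.
Qed.

Lemma pres_gen : Inv K' m'.
Proof.
split; [exact: P1|exact: P2|exact: HM'|exact: P4|exact: P5].
Qed.

End Pres.

End Slot.

Lemma Q_zero K m n d : Q K m n d vzero.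
Proof.
split; first by move=> k; rewrite /vzero eqxx.
split; left; exists 0 => k; by rewrite /vzero eqxx.
Qed.

Lemma knows_nil w j : knows [::] w -> w j = 0.
Proof. by move=> [cs [_ H]]; rewrite H big_ord0. Qed.

Lemma heard_nil k : ~ heard [::] k.
Proof. move=> [_ [w [Hw Hk]]]; by rewrite (knows_nil _ Hw) eqxx in Hk. Qed.

Lemma rank_nil : is_rank [::] 0.
Proof.
split; first by exists [::]; split=> //; split=> // cs _ _ i.
move=> B HB Hk; case: (posnP (size B)) => [->//|Hpos]; exfalso.
have := HB (1 :: nseq (size B).-1 0); rewrite /= size_nseq prednK // => H.
have H1 : (1 : F3) = 0.
  apply: (H erefl _ 0 Hpos) => j; rewrite big1 // => i _.
  by rewrite (knows_nil _ (Hk i (ltn_ord i))) mulr0.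
by move/eqP: H1; rewrite oner_eq0.
Qed.

Lemma inv0 (K0 : 'I_3 -> seq vec) : (forall i, K0 i = [::]) ->
  Inv K0 0 /\ valid_labels K0 0 r1 r2 r3.
Proof.
move=> H0.
have Hun : forall i, ~ unsolved_nonempty (K0 i) by move=> i [k [Hh _]]; move: Hh; rewrite H0; apply: heard_nil.
split.
  split.
  - by move=> i j k; rewrite H0.
  - by exists r1 => k /andP [k1 k2]; move: (leq_trans k1 k2).
  - exists (fun _ => 0%N); split; first by move=> i; rewrite H0; exact: rank_nil.
    by apply/esym/eqP; rewrite -leqn0; apply/bigmax_leqP.
  - by move=> i j _ /Hun.
  - by move=> i j _ _ k1 k2 [Hh _]; move: Hh; rewrite H0 => /heard_nil.
split=> //; split=> //; split=> // _; split.
  split; first by move=> k /andP [k1 k2]; move: (leq_trans k1 k2).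
  by move=> i _.
move=> H; exfalso; apply: H; by split=> /Hun.
Qed.

Lemma inv_all (arr : nat -> nat) (rcv : nat -> 'I_3 -> bool)
    (K : nat -> 'I_3 -> seq vec) (m : nat -> nat) (lL lN lD : nat -> 'I_3)
    (tx : nat -> option vec) :
  valid_run arr rcv K m lL lN lD tx ->
  forall t, Inv (K t) (m t) /\ valid_labels (K t) (m t) (lL t) (lN t) (lD t).
Proof.
move=> [_ [H0 [Hm0 [Hl0 [Hn0 [Hd0 [Htx [Hup [Hmr Hlab]]]]]]]]].
elim=> [|t [HI HL]].
  by rewrite Hm0 Hl0 Hn0 Hd0; apply: inv0.
split; last exact: Hlab.
have [_ HQ] := good HI HL (Htx t).
case E: (tx t) => [v|].
  apply: (pres_gen HI HL (HQ v E) _ (Hmr t)) => i.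
  by rewrite Hup E; case: (rcv t i); [right|left].
apply: (pres_gen HI HL (Q_zero _ _ _ _) _ (Hmr t)) => i.
by rewrite Hup E; left.
Qed.

Unset Implicit Arguments.
Local Close Scope ring_scope.

Theorem theorem13 (arr : nat -> nat) (rcv : nat -> 'I_3 -> bool)
    (K : nat -> 'I_3 -> seq vec) (m : nat -> nat) (lL lN lD : nat -> 'I_3)
    (tx : nat -> option vec) :
  valid_run arr rcv K m lL lN lD tx ->
  forall (t : nat) (i : 'I_3),
    ~ decoded_upto (K t i) (arr t) ->
    exists v, tx t = Some v /\ ~ knows (K t i) v.
Proof.
move=> Hrun t i Hi.
have [HI HL] := inv_all Hrun t.
have [_ [_ [_ [_ [_ [_ [Htx _]]]]]]] := Hrun.
have [G _] := good HI HL (Htx t).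
exact: G i Hi.
Qed.
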